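(* In the two-party one-way communication (Holevo–Frenkel–Weiner) scenario, the utility of a one-bit classical channel increases when the assisting shared randomness is increased from $1$ bit to $\log 3$ bits: there exist finite sets $\mathcal{X},\mathcal{B}$ and a payoff function $\beta$ on correlations such that $\sup_{P\in\mathcal{C}_3}\beta(P)>\sup_{P\in\mathcal{C}_2}\beta(P)$.
   Context: Scenario: Alice receives an input $x$ from a finite set $\mathcal{X}$, Bob must output $b$ from a finite set $\mathcal{B}$; a correlation is $P=(P(b|x))$, a task is a real payoff function $\beta$ on correlations, and the utility of a resource is $\sup\beta(P)$ over correlations achievable with it. $\mathcal{C}$: correlations $P(b|x)=\sum_{m\in\{0,1\}}E(m|x)D(b|m)$ with $E(\cdot|x)$ a probability distribution on $\{0,1\}$ for each $x$ and $D(\cdot|m)$ a probability distribution on $\mathcal{B}$ for each $m$ (one bit of classical communication with local randomness). $\mathcal{C}_K$: one bit of classical communication assisted by a shared random variable taking at most $K$ values, i.e. correlations $\sum_{\lambda=1}^{K}q_\lambda P_\lambda$ with $q_\lambda\ge0$, $\sum_\lambda q_\lambda=1$, $P_\lambda\in\mathcal{C}$. Thus $\mathcal{C}_2$ corresponds to (at most) $1$ bit of shared randomness (a binary shared variable with arbitrary bias) and $\mathcal{C}_3$ to $\log 3$ bits (a shared variable with three values). *)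

(* Defs.v *)
From HB Require Import structures.
From mathcomp Require Import all_boot all_order all_algebra.
From mathcomp Require Import classical_sets reals constructive_ereal ereal.
Set Implicit Arguments. Unset Strict Implicit. Unset Printing Implicit Defensive.
Import Order.TTheory GRing.Theory Num.Theory.
Local Open Scope ring_scope.
Local Open Scope classical_set_scope.

Section HFW.
Variable R : realType.

Definition is_dist (T : finType) (p : T -> R) : Prop :=
  (forall t, 0 <= p t) /\ \sum_(t : T) p t = 1.

(* a correlation P = (P(b|x)) is represented as a function X -> B -> R *)

Definition one_bit (X B : finType) (P : X -> B -> R) : Prop :=
  exists (E : X -> bool -> R) (D : bool -> B -> R),
    (forall x, is_dist (E x)) /\ (forall m, is_dist (D m)) /\
    forall x b, P x b = \sum_(m : bool) E x m * D m b.

Definition one_bit_SR (K : nat) (X B : finType) (P : X -> B -> R) : Prop :=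
  exists (q : 'I_K -> R) (Ps : 'I_K -> X -> B -> R),
    is_dist q /\ (forall l, one_bit (Ps l)) /\
    forall x b, P x b = \sum_(l : 'I_K) q l * Ps l x b.

Definition utility (K : nat) (X B : finType) (beta : (X -> B -> R) -> R)
  : \bar R :=
  ereal_sup [set (beta P)%:E | P in one_bit_SR K (X:=X) (B:=B)].
End HFW.

(* Main.v *)
Require Import Defs.
From mathcomp Require Import all_boot all_order all_algebra.
From mathcomp Require Import classical_sets reals constructive_ereal ereal.
From mathcomp Require Import lra.
Import Order.TTheory GRing.Theory Num.Theory.
Local Open Scope ring_scope.

Section Aux.
Variable R : realType.

Definition mat (P : 'I_4 -> 'I_4 -> R) : 'M[R]_4 := \matrix_(i, j) P i j.

Lemma sum_bool (F : bool -> R) : \sum_(m : bool) F m = F true + F false.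
Proof. by rewrite big_bool. Qed.

Lemma C2_det (P : 'I_4 -> 'I_4 -> R) : one_bit_SR 2 P -> \det (mat P) = 0.
Proof.
move=> [q [Ps [[q0 q1] [hP hPs]]]].
have [E0 [D0 [hE0 [hD0 hP0]]]] := hP ord0.
have [E1 [D1 [hE1 [hD1 hP1]]]] := hP (lift ord0 ord0).
pose A : 'M[R]_(4,3) := \matrix_(x, k) (if (k : nat) == 0%N then 1
   else if (k : nat) == 1%N then q ord0 * E0 x true else q (lift ord0 ord0) * E1 x true).
pose Bm : 'M[R]_(3,4) := \matrix_(k, b) (if (k : nat) == 0%N then
    q ord0 * D0 false b + q (lift ord0 ord0) * D1 false b
   else if (k : nat) == 1%N then D0 true b - D0 false b else D1 true b - D1 false b).
have eM : mat P = A *m Bm.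
  apply/matrixP => x b; rewrite !mxE hPs.
  rewrite !big_ord_recl !big_ord0 /= !mxE /= hP0 hP1 !sum_bool.
  have e0 : E0 x false = 1 - E0 x true.
    by have [_ ] := hE0 x; rewrite sum_bool => h; lra.
  have e1 : E1 x false = 1 - E1 x true.
    by have [_ ] := hE1 x; rewrite sum_bool => h; lra.
  rewrite e0 e1; lra.
apply/eqP; apply: contraT => hdet.
have hu : mat P \in unitmx by rewrite unitmxE unitfE.
have := mxrank_unit hu; rewrite eM => hr.
have := mxrankM_maxl A Bm; rewrite hr.
by move=> h; have := leq_trans h (rank_leq_col A).
Qed.

Lemma det_one_bit (f : 'I_4 -> 'I_4) (b0 b1 : 'I_4) :
  (forall x, f x = b0 \/ f x = b1) -> one_bit (fun x b => ((f x == b)%:R : R)).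
Proof.
move=> hf.
exists (fun x m => (((f x == b1) == m))%:R), (fun m b => (((if m then b1 else b0) == b))%:R).
split; [|split].
- move=> x; split; first by move=> t; exact: ler0n.
  by rewrite sum_bool; case: (f x == b1) => /=; rewrite ?add0r ?addr0.
- move=> m; split; first by move=> t; exact: ler0n.
  rewrite (bigD1 (if m then b1 else b0)) //= eqxx big1 ?addr0 // => i /negbTE.
  by rewrite eq_sym => ->.
- move=> x b; rewrite sum_bool /= -!natrM -natrD; congr (_%:R).
  case: (hf x) => ->; first case: (eqVneq b0 b1) => [->|_].
  + by rewrite eqxx /=; case: (b1 == b).
  + by case: (b1 == b); case: (b0 == b).
  + by rewrite eqxx; case: (b1 == b); case: (b0 == b).
Qed.

Definition o4 (n : nat) (h : (n < 4)%N) : 'I_4 := Ordinal h.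
Definition f1 (x : 'I_4) : 'I_4 := if (x : nat) == 2%N then @o4 1 isT else @o4 2 isT.
Definition f2 (x : 'I_4) : 'I_4 := if (x : nat) == 3%N then @o4 0 isT else @o4 2 isT.
Definition f3 (x : 'I_4) : 'I_4 := if (x : nat) == 0%N then @o4 3 isT else @o4 2 isT.
Definition fs (l : 'I_3) := if (l : nat) == 0%N then f1 else if (l : nat) == 1%N then f2 else f3.
Definition Pstar (x b : 'I_4) : R := \sum_(l < 3) 3^-1 * ((fs l x == b)%:R).

Lemma Pstar_C3 : one_bit_SR 3 Pstar.
Proof.
exists (fun _ => 3^-1), (fun l x b => ((fs l x == b)%:R)); split; [|split].
- split; first by move=> _; rewrite invr_ge0 ler0n.
  rewrite sumr_const card_ord; lra.
- move=> l; rewrite /fs; case: ifP => _; last case: ifP => _.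
  + apply: (@det_one_bit f1 (@o4 1 isT) (@o4 2 isT)) => x; rewrite /f1; case: ifP; auto.
  + apply: (@det_one_bit f2 (@o4 0 isT) (@o4 2 isT)) => x; rewrite /f2; case: ifP; auto.
  + apply: (@det_one_bit f3 (@o4 3 isT) (@o4 2 isT)) => x; rewrite /f3; case: ifP; auto.
- by [].
Qed.

Definition Nf (k j : nat) : R :=
  match k, j with
  | 0, 1 => -2 | 0, 3 => 3
  | 1, 1 => -2 | 1, 2 => 3
  | 2, 1 => 1
  | 3, 0 => 3 | 3, 1 => -2
  | _, _ => 0 end.

Lemma Pstar_inv : mat Pstar *m (\matrix_(k, j) Nf k j) = 1%:M.
Proof.
apply/matrixP => i j; rewrite !mxE.
rewrite !big_ord_recl big_ord0 !mxE /Pstar.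
rewrite !big_ord_recl !big_ord0 /= /fs /= /f1 /f2 /f3.
case: i => [[|[|[|[|i]]]] Hi] //=; case: j => [[|[|[|[|j]]]] Hj] //=.
all: rewrite /Nf /=; lra.
Qed.

End Aux.

Theorem theorem3 (R : realType) :
  exists (X B : finType) (beta : (X -> B -> R) -> R),
    (utility 2 beta < utility 3 beta)%E.
Proof.
exists 'I_4, 'I_4, (fun P => (\det (@mat R P)) ^+ 2).
have hpos : 0 < (\det (@mat R (Pstar R))) ^+ 2.
  have [hu _] := mulmx1_unit (Pstar_inv R).
  rewrite exprn_even_gt0 //; by move: hu; rewrite unitmxE unitfE.
apply: (@le_lt_trans _ _ 0%E).
  apply: ge_ereal_sup => _ [P hP <-].
  by rewrite (@C2_det R P hP) expr0n /= lee_fin.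
apply: (@lt_le_trans _ _ ((\det (@mat R (Pstar R))) ^+ 2)%:E).
  by rewrite lte_fin.
apply: ereal_sup_ubound; exists (Pstar R) => //; exact: (Pstar_C3 R).
Qed.
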